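(* Let $f_n=[\psi_1,\psi_1^*]\cdots[\psi_n,\psi_n^*]\in\mathrm{Cl}_q(n,k)$, where $[A,B]=AB-BA$, and let $\mathrm{Cl}_q^+(n,k)$ be the subalgebra generated by the elements of even degree for the $\mathbb{Z}_2$-grading. Let $\pi\colon\mathrm{Cl}_q(n,k)\to\mathrm{End}(W)$ be an irreducible representation. Then $W=W^+\oplus W^-$ with $W^\pm=(1\pm\pi(f_n))(W)$, and each $W^\pm$ is invariant under $\mathrm{Cl}_q^+(n,k)$.
   Context: Let $\mathbb{k}$ be a field of characteristic different from $2$, let $q\in\mathbb{k}^\times$, and let $n,k$ be positive integers. The quantum Clifford algebra $\mathrm{Cl}_q(n,k)$ is the unital associative $\mathbb{k}$-algebra generated by $\psi_a,\psi_a^*,\omega_a,\omega_a^{-1}$ for $a\in\{1,\dots,n\}$, subject to the relations (for all $a,b\in\{1,\dots,n\}$): $\omega_a\omega_b=\omega_b\omega_a$; $\omega_a\omega_a^{-1}=1$; $\omega_a\psi_b=q^{\delta_{ab}}\psi_b\omega_a$; $\omega_a\psi_b^*=q^{-\delta_{ab}}\psi_b^*\omega_a$; $\psi_a\psi_b+\psi_b\psi_a=0$; $\psi_a^*\psi_b^*+\psi_b^*\psi_a^*=0$; $\psi_a\psi_a^*+q^k\psi_a^*\psi_a=\omega_a^{-k}$; $\psi_a\psi_a^*+q^{-k}\psi_a^*\psi_a=\omega_a^{k}$; and $\psi_a\psi_b^*+\psi_b^*\psi_a=0$ if $a\neq b$. The $\mathbb{Z}_2$-grading (superalgebra structure) is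 given by declaring $\psi_a,\psi_a^*$ odd and $\omega_a^{\pm1}$ even. *)

(* Defs.v *)
From HB Require Import structures.
From mathcomp Require Import all_boot all_order all_algebra.
Set Implicit Arguments. Unset Strict Implicit. Unset Printing Implicit Defensive.
Import GRing.Theory.
Local Open Scope ring_scope.

(* A representation pi : Cl_q(n,k) -> End(W) on a K-vector space W, given by
   the images of the generators psi_a, psi_a^*, omega_a, omega_a^{-1}
   (a : 'I_n, i.e. a in {1,..,n} shifted to {0,..,n-1}), which are linear
   endomorphisms of W satisfying the defining relations of Cl_q(n,k). *)
Record ClRep (K : fieldType) (q : K) (n k : nat) (W : lmodType K) := {
  psi  : 'I_n -> W -> W;
  psis : 'I_n -> W -> W;
  om   : 'I_n -> W -> W;
  omi  : 'I_n -> W -> W;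
  psi_lin  : forall a (c : K) (u v : W), psi a (c *: u + v) = c *: psi a u + psi a v;
  psis_lin : forall a (c : K) (u v : W), psis a (c *: u + v) = c *: psis a u + psis a v;
  om_lin   : forall a (c : K) (u v : W), om a (c *: u + v) = c *: om a u + om a v;
  omi_lin  : forall a (c : K) (u v : W), omi a (c *: u + v) = c *: omi a u + omi a v;
  rel_om_comm : forall a b v, om a (om b v) = om b (om a v);
  rel_om_omi : forall a v, om a (omi a v) = v;
  rel_omi_om : forall a v, omi a (om a v) = v;
  rel_om_psi : forall a b v, om a (psi b v) = (if a == b then q else 1) *: psi b (om a v);
  rel_om_psis : forall a b v,
      om a (psis b v) = (if a == b then q^-1 else 1) *: psis b (om a v);
  rel_psi_psi : forall a b v, psi a (psi b v) + psi b (psi a v) = 0;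
  rel_psis_psis : forall a b v, psis a (psis b v) + psis b (psis a v) = 0;
  rel_psi_psis_minus : forall a v,
      psi a (psis a v) + q ^+ k *: psis a (psi a v) = iter k (omi a) v;
  rel_psi_psis_plus : forall a v,
      psi a (psis a v) + q ^- k *: psis a (psi a v) = iter k (om a) v;
  rel_psi_psis_ne : forall a b v, a != b -> psi a (psis b v) + psis b (psi a v) = 0
}.

Section Defs.
Variables (K : fieldType) (q : K) (n k : nat) (W : lmodType K).
Variable pi : ClRep q n k W.

Definition is_subspace (S : W -> Prop) :=
  S 0 /\ (forall (c : K) u v, S u -> S v -> S (c *: u + v)).

Inductive gen := GPsi of 'I_n | GPsiS of 'I_n | GOm of 'I_n | GOmi of 'I_n.

Definition gen_act (g : gen) : W -> W :=
  match g with
  | GPsi a => psi pi a | GPsiS a => psis pi a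
  | GOm a => om pi a | GOmi a => omi pi a
  end.

Definition gen_odd (g : gen) : bool :=
  match g with GPsi _ | GPsiS _ => true | _ => false end.

Definition word_act (w : seq gen) : W -> W :=
  foldr (fun g f => gen_act g \o f) id w.

(* monomials of even Z_2-degree; they span Cl_q^+(n,k) *)
Definition even_word (w : seq gen) : bool := ~~ odd (count gen_odd w).

Definition irreducible : Prop :=
  (exists v : W, v != 0) /\
  forall S : W -> Prop, is_subspace S ->
    (forall g v, S v -> S (gen_act g v)) ->
    (forall v, S v -> v = 0) \/ (forall v, S v).

Definition comm_act (a : 'I_n) (v : W) : W :=
  psi pi a (psis pi a v) - psis pi a (psi pi a v).

Definition fn_act : W -> W :=
  foldr (fun a f => comm_act a \o f) id (enum 'I_n).

Definition Wplus (v : W) : Prop := exists u, v = u + fn_act u.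
Definition Wminus (v : W) : Prop := exists u, v = u - fn_act u.

Definition direct_sum_decomp (S1 S2 : W -> Prop) : Prop :=
  (forall v, exists v1 v2, [/\ S1 v1, S2 v2 & v = v1 + v2]) /\
  (forall v, S1 v -> S2 v -> v = 0).

Definition Clplus_invariant (S : W -> Prop) : Prop :=
  forall w, even_word w -> forall v, S v -> S (word_act w v).

End Defs.

(* Main.v *)
Require Import Defs.
From mathcomp Require Import all_boot all_order all_algebra.
Set Implicit Arguments. Unset Strict Implicit. Unset Printing Implicit Defensive.
Import GRing.Theory.
Local Open Scope ring_scope.

Section Aux.
Variables (K : fieldType) (W : lmodType K).

Definition Lin (f : W -> W) := forall (c : K) u v, f (c *: u + v) = c *: f u + f v.

Lemma Lin0 f : Lin f -> f 0 = 0.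
Proof. move=> H; have := H 1 0 0; rewrite !scale1r addr0.
move/(congr1 (fun x => x - f 0)). rewrite /= addrK subrr. by move=> H0; rewrite {2}H0. Qed.

Lemma LinD f : Lin f -> forall u v, f (u + v) = f u + f v.
Proof. by move=> H u v; have := H 1 u v; rewrite !scale1r. Qed.

Lemma LinZ f : Lin f -> forall c u, f (c *: u) = c *: f u.
Proof. by move=> H c u; rewrite -[c *: u]addr0 H Lin0 // addr0. Qed.

Lemma LinN f : Lin f -> forall u, f (- u) = - f u.
Proof. by move=> H u; rewrite -scaleN1r LinZ // scaleN1r. Qed.

Lemma LinB f : Lin f -> forall u v, f (u - v) = f u - f v.
Proof. by move=> H u v; rewrite LinD // LinN. Qed.

Lemma Lin_comp f g : Lin f -> Lin g -> Lin (f \o g).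
Proof. by move=> Hf Hg c u v /=; rewrite Hg Hf. Qed.

Lemma Lin_id : Lin id.
Proof. by []. Qed.

Lemma double0 (hK : (2%:R : K) != 0) (u : W) : u + u = 0 -> u = 0.
Proof.
move=> H; have : (2%:R : K) *: u = 0 by rewrite scaler_nat mulr2n.
by move/eqP; rewrite scaler_eq0 (negbTE hK) /= => /eqP.
Qed.
End Aux.

Section Main.
Variables (K : fieldType) (q : K) (n k : nat) (W : lmodType K).
Variable pi : ClRep q n k W.
Variable (hK : (2%:R : K) != 0) (hq : q != 0).

Local Notation P := (psi pi).
Local Notation S := (psis pi).
Local Notation c := (comm_act pi).

Lemma LP a : Lin (P a). Proof. exact: psi_lin. Qed.
Lemma LS a : Lin (S a). Proof. exact: psis_lin. Qed.
Lemma LO a : Lin (om pi a). Proof. exact: om_lin. Qed.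
Lemma LOi a : Lin (omi pi a). Proof. exact: omi_lin. Qed.

Lemma Lc a : Lin (c a).
Proof.
move=> x u v; rewrite /comm_act.
by rewrite !(LS a, LP a) scalerBr opprD addrACA.
Qed.

Lemma anti (x y : W) : x + y = 0 -> y = - x.
Proof. by move/eqP; rewrite addrC addr_eq0 => /eqP. Qed.

Lemma PP0 a v : P a (P a v) = 0.
Proof. apply: (double0 hK). exact: (rel_psi_psi pi a a v). Qed.
Lemma SS0 a v : S a (S a v) = 0.
Proof. apply: (double0 hK). exact: (rel_psis_psis pi a a v). Qed.

Lemma c_psi a b v : c a (P b v) = (if a == b then -1 else 1) *: P b (c a v).
Proof.
rewrite /comm_act; case: eqP => [<-|/eqP nab].
  by rewrite scaleN1r PP0 (Lin0 (LS a)) subr0 (LinB (LP a)) PP0 sub0r opprK.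
have SP w : S a (P b w) = - P b (S a w).
  by apply: anti; apply: (rel_psi_psis_ne pi); rewrite eq_sym.
have PPr w : P a (P b w) = - P b (P a w) by apply: anti; apply: (rel_psi_psi pi).
by rewrite scale1r !(SP, PPr, LinN (LP a), LinN (LS a)) (LinB (LP b)) !opprK.
Qed.

Lemma c_psis a b v : c a (S b v) = (if a == b then -1 else 1) *: S b (c a v).
Proof.
rewrite /comm_act; case: eqP => [<-|/eqP nab].
  by rewrite scaleN1r SS0 (Lin0 (LP a)) sub0r (LinB (LS a)) SS0 subr0.
have PS w : P a (S b w) = - S b (P a w).
  by apply: anti; rewrite addrC; apply: (rel_psi_psis_ne pi).
have SSr w : S a (S b w) = - S b (S a w) by apply: anti; apply: (rel_psis_psis pi).
by rewrite scale1r !(SSr, PS, LinN (LP a), LinN (LS a)) (LinB (LS b)) !opprK.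
Qed.

Lemma c_om a b v : c a (om pi b v) = om pi b (c a v).
Proof.
rewrite /comm_act (LinB (LO b)) !(rel_om_psi, rel_om_psis, LinZ (LP a), LinZ (LS a), scalerA).
have -> : (if b == a then q^-1 else 1) * (if b == a then q else 1) = 1.
  by case: (b == a); rewrite ?mulVf ?mulr1.
have -> : (if b == a then q else 1) * (if b == a then q^-1 else 1) = 1.
  by case: (b == a); rewrite ?mulfV ?mulr1.
by rewrite !scale1r.
Qed.

Lemma c_omi a b v : c a (omi pi b v) = omi pi b (c a v).
Proof.
by rewrite -[LHS](rel_omi_om pi b) -c_om rel_om_omi.
Qed.

Definition gidx (g : gen n) : 'I_n :=
  match g with GPsi a | GPsiS a | GOm a | GOmi a => a end.

Lemma Lgen g : Lin (gen_act pi g).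
Proof. case: g => a; [exact: LP | exact: LS | exact: LO | exact: LOi]. Qed.

Lemma c_gen a g v : c a (gen_act pi g v) =
  (if gen_odd g && (a == gidx g) then -1 else 1) *: gen_act pi g (c a v).
Proof.
case: g => b /=; [exact: c_psi | exact: c_psis | by rewrite scale1r c_om | by rewrite scale1r c_omi].
Qed.

Definition Fl (l : seq 'I_n) : W -> W := foldr (fun a f => c a \o f) id l.

Lemma LFl l : Lin (Fl l).
Proof. elim: l => [|a l IH] /=; [exact: Lin_id | exact: Lin_comp (Lc a) IH]. Qed.

Lemma Fl_gen l g v : Fl l (gen_act pi g v) =
  (-1) ^+ (count (fun a => gen_odd g && (a == gidx g)) l) *: gen_act pi g (Fl l v).
Proof.
elim: l => [|a l IH] /=; first by rewrite expr0 scale1r.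
rewrite IH (LinZ (Lc a)) c_gen scalerA; congr (_ *: _).
by rewrite exprD mulrC; case: (_ && _); rewrite ?expr1 ?expr0.
Qed.

Lemma count_enum g :
  count (fun a => gen_odd g && (a == gidx g)) (enum 'I_n) = gen_odd g.
Proof.
case: (gen_odd g) => /=; last by elim: (enum 'I_n).
have -> : count (fun a => a == gidx g) (enum 'I_n) = count_mem (gidx g) (enum 'I_n) by [].
by rewrite (count_uniq_mem _ (enum_uniq _)) mem_enum.
Qed.

Lemma F_gen g v : fn_act pi (gen_act pi g v) =
  (-1) ^+ gen_odd g *: gen_act pi g (fn_act pi v).
Proof. by have := Fl_gen (enum 'I_n) g v; rewrite count_enum. Qed.

Lemma Lword w : Lin (word_act pi w).
Proof. elim: w => [|g w IH] /=; [exact: Lin_id | exact: Lin_comp (Lgen g) IH]. Qed.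

Lemma F_word w v : fn_act pi (word_act pi w v) =
  (-1) ^+ (count (@gen_odd n) w) *: word_act pi w (fn_act pi v).
Proof.
elim: w => [|g w IH] /=; first by rewrite expr0 scale1r.
rewrite F_gen IH (LinZ (Lgen g)) scalerA -exprD //.
Qed.

Lemma c_comm a b v : a != b -> c b (c a v) = c a (c b v).
Proof.
move=> nab.
transitivity (c b (P a (S a v) - S a (P a v))); first by [].
have nba : (b == a) = false by rewrite eq_sym (negbTE nab).
by rewrite (LinB (Lc b)) !(c_psi, c_psis, nba, scale1r).
Qed.

Lemma c_Fl a l v : a \notin l -> c a (Fl l v) = Fl l (c a v).
Proof.
elim: l v => [|b l IH] v //=.
rewrite in_cons negb_or => /andP[nab nal].
by rewrite -(c_comm _ nab) IH.
Qed.

Lemma iter_om a m v : iter m (om pi a) (iter m (omi pi a) v) = v.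
Proof.
elim: m v => [|m IH] v //.
by rewrite iterSr iterS rel_om_omi IH.
Qed.

Lemma c2 a v : c a (c a v) = v.
Proof.
set x := fun w => P a (S a w); set y := fun w => S a (P a w).
have xy w : x (y w) = 0 by rewrite /x /y SS0 (Lin0 (LP a)).
have yx w : y (x w) = 0 by rewrite /x /y PP0 (Lin0 (LS a)).
have Lx : Lin x by exact: Lin_comp (LP a) (LS a).
have Ly : Lin y by exact: Lin_comp (LS a) (LP a).
have -> : c a (c a v) = x (x v - y v) - y (x v - y v) by [].
rewrite (LinB Lx) (LinB Ly) xy yx subr0 sub0r opprK.
have hm := rel_psi_psis_minus pi a v.
have hp := rel_psi_psis_plus pi a (iter k (omi pi a) v).
have hx : x (x v) = x (iter k (omi pi a) v).
  by rewrite -hm (LinD Lx) (LinZ Lx) xy scaler0 addr0.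
have hy : y (y v) = q ^- k *: y (iter k (omi pi a) v).
  rewrite -hm (LinD Ly) (LinZ Ly) yx add0r scalerA mulVf ?scale1r //.
  by rewrite expf_neq0.
by rewrite hx hy; rewrite /x /y hp iter_om.
Qed.

Lemma F2l l v : uniq l -> Fl l (Fl l v) = v.
Proof.
elim: l v => [|a l IH] v //= /andP[anl ul].
by rewrite -c_Fl // c2 IH.
Qed.

Local Notation F := (fn_act pi).

Lemma main_sec :
  [/\ direct_sum_decomp (Wplus pi) (Wminus pi),
      is_subspace (Wplus pi), is_subspace (Wminus pi),
      Clplus_invariant pi (Wplus pi) & Clplus_invariant pi (Wminus pi)].
Proof.
have LF : Lin (fn_act pi) by exact: LFl.
have F2 v : fn_act pi (fn_act pi v) = v by exact: F2l (enum_uniq _).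
have Fw w v : even_word w -> fn_act pi (word_act pi w v) = word_act pi w (fn_act pi v).
  by move=> ew; rewrite F_word -signr_odd (negbTE ew) expr0 scale1r.
split.
- split.
    move=> v; set h := (2%:R : K)^-1 *: v.
    exists (h + F h), (h - F h); split; [by exists h | by exists h |].
    rewrite addrACA subrr addr0 /h -scalerDl.
    have -> : forall x : K, x + x = x * 2%:R by move=> x; rewrite mulr_natr mulr2n.
    by rewrite mulVf // scale1r.
  move=> v [u ->] [u' e].
  apply: (double0 hK).
  have e1 : F (u + F u) = u + F u by rewrite (LinD LF) F2 addrC.
  have e2 : F (u + F u) = - (u + F u) by rewrite e (LinB LF) F2 opprB.
  by rewrite -{1}e1 e2 addNr.
- split; first by exists 0; rewrite (Lin0 LF) addr0.
  move=> x _ _ [u1 ->] [u2 ->]; exists (x *: u1 + u2).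
  by rewrite LF scalerDr addrACA.
- split; first by exists 0; rewrite (Lin0 LF) subr0.
  move=> x _ _ [u1 ->] [u2 ->]; exists (x *: u1 + u2).
  by rewrite LF scalerBr opprD addrACA.
- move=> w ew _ [u ->]; exists (word_act pi w u).
  by rewrite (LinD (Lword w)) Fw.
- move=> w ew _ [u ->]; exists (word_act pi w u).
  by rewrite (LinB (Lword w)) Fw.
Qed.

End Main.

Theorem proposition4p7 (K : fieldType) (hK : (2%:R : K) != 0)
  (q : K) (hq : q != 0) (n k : nat) (hn : (0 < n)%N) (hk : (0 < k)%N)
  (W : lmodType K) (pi : ClRep q n k W) :
  irreducible pi ->
  [/\ direct_sum_decomp (Wplus pi) (Wminus pi),
      is_subspace (Wplus pi), is_subspace (Wminus pi),
      Clplus_invariant pi (Wplus pi) & Clplus_invariant pi (Wminus pi)].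
Proof.
move=> _; exact: main_sec.
Qed.
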